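(* Let $C$ be a set of colors and $\sqsubseteq$ any preference relation on $C^\omega$. For any positive integers $n,q$, any $n$-node arena $\mathcal{A}$ over $C$, and any $q$-state strategy $S_1$ of Player 0 in $\mathcal{A}$, there exists a chromatic $(qn+1)^n$-state strategy $S_2$ of Player 0 in $\mathcal{A}$ such that for every node $v$ of $\mathcal{A}$, $S_2$ is at least as good as $S_1$ w.r.t. $\sqsubseteq$ from $v$.
   Context: A preference relation is a total preorder $\sqsubseteq$ on $C^\omega$. An arena over $C$ is a tuple $\mathcal{A} = \langle V, V_0, V_1, E\rangle$ of finite sets with $V = V_0 \sqcup V_1$, $E \subseteq V \times C \times V$, and every node having at least one outgoing edge; for $e=(s,c,t)$ write $\mathsf{source}(e)=s$, $\mathsf{col}(e)=c$, $\mathsf{target}(e)=t$. A path is a nonempty finite or infinite sequence of edges $e_1e_2\ldots$ with $\mathsf{target}(e_i)=\mathsf{source}(e_{i+1})$; for each node $v$ there is also a $0$-length path $\lambda_v$ with source and target $v$. $\mathsf{col}$ extends letterwise to sequences of edges. A strategy of Player 0 is a function $S$ assigning to each finite path $p$ with $\mathsf{target}(p)\in V_0$ an edge $S(p)$ with $\mathsf{source}(S(p))=\mathsf{target}(p)$. A path $p=e_1e_2\ldots$ is consistent with $S$ if (when $\mathsf{source}(p)\in V_0$) $e_1=S(\lambda_{\mathsf{source}(p)})$ and for each $1\le i<|p|$ with $\mathsf{target}(e_i)\in V_0$ we have $e_{i+1}=S(e_1\ldots e_i)$. For $v\in V$, $\mathsf{col}(S,v)\subseteq C^\omega$ is the set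 of $\mathsf{col}(p)$ over all infinite paths $p$ from $v$ consistent with $S$. A strategy $S_2$ is at least as good as $S_1$ w.r.t. $\sqsubseteq$ from $v$ if for every $\beta\in\mathsf{col}(S_2,v)$ there exists $\alpha\in\mathsf{col}(S_1,v)$ with $\alpha\sqsubseteq\beta$. A memory structure is $\mathcal{M}=\langle M, m_{init},\delta\rangle$ with $M$ finite, $m_{init}\in M$, $\delta: M\times E\to M$ (extended to finite edge sequences in the usual way). $S$ is an $\mathcal{M}$-strategy if for all finite paths $p_1,p_2$ with $\mathsf{target}(p_1)=\mathsf{target}(p_2)\in V_0$, $\delta(m_{init},p_1)=\delta(m_{init},p_2)$ implies $S(p_1)=S(p_2)$. $\mathcal{M}$ is chromatic if there is $\sigma: M\times C\to M$ with $\delta(m,e)=\sigma(m,\mathsf{col}(e))$ for all $m,e$. A (chromatic) $q$-state strategy is an $\mathcal{M}$-strategy for some (chromatic) memory structure $\mathcal{M}$ with $|M|=q$. *)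

(* Defs.v *)
From mathcomp Require Import all_boot.
Set Implicit Arguments. Unset Strict Implicit. Unset Printing Implicit Defensive.

(* The map
   e |-> (src e, col e, tgt e) is required injective, so E is (isomorphic to)
   a finite subset of V x C x V, and every node has an outgoing edge. *)
Record arena (C : Type) := Arena {
  Vt : finType;
  V0 : {set Vt};
  Et : finType;
  src : Et -> Vt;
  col : Et -> C;
  tgt : Et -> Vt;
  edge_inj : forall e1 e2, src e1 = src e2 -> col e1 = col e2 ->
                           tgt e1 = tgt e2 -> e1 = e2;
  out_edge : forall v, exists e, src e = v
}.

Section Arena.
Variables (C : Type) (A : arena C).
Local Notation V := (Vt A).
Local Notation E := (Et A).

(* A finite path is represented by its source node v and its list of edges;
   the empty list is the 0-length path lambda_v. *)
Fixpoint is_path (v : V) (es : seq E) : bool :=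
  if es is e :: es' then (src e == v) && is_path (tgt e) es' else true.

Fixpoint path_target (v : V) (es : seq E) : V :=
  if es is e :: es' then path_target (tgt e) es' else v.

Definition strategy := V -> seq E -> E.

Definition is_strategy (S : strategy) : Prop :=
  forall v es, is_path v es -> path_target v es \in V0 A ->
    src (S v es) = path_target v es.

Definition inf_path_from (v : V) (p : nat -> E) : Prop :=
  src (p 0) = v /\ forall i, tgt (p i) = src (p i.+1).

Definition prefix (p : nat -> E) (i : nat) : seq E := [seq p k | k <- iota 0 i].

(* consistency with S: whenever the next edge leaves a V0 node, it is the
   edge chosen by S on the prefix (for i = 0 this is S(lambda_v)). *)
Definition consistent (S : strategy) (v : V) (p : nat -> E) : Prop :=
  forall i, src (p i) \in V0 A -> p i = S v (prefix p i).

Definition col_set (S : strategy) (v : V) : (nat -> C) -> Prop :=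
  fun w => exists p, inf_path_from v p /\ consistent S v p /\ w = (fun i => col (p i)).

Definition at_least_as_good (pref : (nat -> C) -> (nat -> C) -> Prop)
  (S2 S1 : strategy) (v : V) : Prop :=
  forall beta, col_set S2 v beta -> exists alpha, col_set S1 v alpha /\ pref alpha beta.

Definition delta_star (M : Type) (delta : M -> E -> M) (m : M) (es : seq E) : M :=
  foldl delta m es.

Definition is_M_strategy (M : Type) (m_init : M) (delta : M -> E -> M)
  (S : strategy) : Prop :=
  forall v1 es1 v2 es2, is_path v1 es1 -> is_path v2 es2 ->
    path_target v1 es1 = path_target v2 es2 ->
    path_target v1 es1 \in V0 A ->
    delta_star delta m_init es1 = delta_star delta m_init es2 ->
    S v1 es1 = S v2 es2.

Definition chromatic (M : Type) (delta : M -> E -> M) : Prop :=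
  exists sigma : M -> C -> M, forall m e, delta m e = sigma m (col e).

Definition qstate_strategy (q : nat) (S : strategy) : Prop :=
  exists (M : finType) (m_init : M) (delta : M -> E -> M),
    #|M| = q /\ is_M_strategy m_init delta S.

Definition chromatic_qstate_strategy (q : nat) (S : strategy) : Prop :=
  exists (M : finType) (m_init : M) (delta : M -> E -> M),
    #|M| = q /\ chromatic delta /\ is_M_strategy m_init delta S.

End Arena.

Definition preference (C : Type) (pref : (nat -> C) -> (nat -> C) -> Prop) : Prop :=
  (forall a, pref a a) /\
  (forall a b c, pref a b -> pref b c -> pref a c) /\
  (forall a b, pref a b \/ pref b a).

(* Main.v *)
From Stdlib Require Import ClassicalEpsilon Classical FunctionalExtensionality.
Require Import Defs.
From mathcomp Require Import all_boot.
Set Implicit Arguments. Unset Strict Implicit. Unset Printing Implicit Defensive.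

Lemma inf_often (T : finType) (f : nat -> T) :
  exists a, forall N, exists t, N <= t /\ f t = a.
Proof.
apply: NNPP => H.
have H1 : forall a, exists N, forall t, N <= t -> f t <> a.
  move=> a; apply: NNPP => H2; apply: H; exists a => N.
  apply: NNPP => H3; apply: H2; exists N => t Ht Hf; apply: H3; by exists t.
have H2 : forall l : seq T, exists N, forall a, a \in l -> forall t, N <= t -> f t <> a.
  elim=> [|b l [N IH]]; first by exists 0.
  have [Nb Hb] := H1 b.
  exists (maxn N Nb) => a; rewrite inE => /orP [/eqP -> | Ha] t Ht.
    apply: Hb; exact: leq_trans (leq_maxr _ _) Ht.
  apply: IH => //; exact: leq_trans (leq_maxl _ _) Ht.
have [N HN] := H2 (enum T).
exact: (HN (f N) (mem_enum _ _) N (leqnn N)).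
Qed.

Lemma best_elem (T : finType) (P : T -> Prop) (R : T -> T -> Prop) :
  (forall a, R a a) -> (forall a b c, R a b -> R b c -> R a c) ->
  (forall a b, R a b \/ R b a) ->
  (exists t, P t) -> exists t, P t /\ forall t', P t' -> R t t'.
Proof.
move=> Rr Rt Rtot [t0 Pt0].
suff H : forall l : seq T, (exists t, t \in l /\ P t) ->
  exists t, P t /\ forall t', t' \in l -> P t' -> R t t'.
  have [t [Pt Ht]] := H (enum T) (ex_intro _ t0 (conj (mem_enum _ _) Pt0)).
  exists t; split=> // t' Pt'; apply: Ht => //; exact: mem_enum.
elim=> [|a l IH]; first by case=> t [].
case=> t [Ht Pt].
case: (classic (exists t, t \in l /\ P t)) => [Hl | Hl].
  have [b [Pb Hb]] := IH Hl.
  case: (classic (P a)) => Pa.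
  - case: (Rtot a b) => Hab.
    + exists a; split=> // t'; rewrite inE => /orP [/eqP -> _ | Ht' Pt']; first exact: Rr.
      exact: (Rt _ _ _ Hab (Hb _ Ht' Pt')).
    + exists b; split=> // t'; rewrite inE => /orP [/eqP -> _ | Ht' Pt'] //.
      exact: Hb.
  - exists b; split=> // t'; rewrite inE => /orP [/eqP -> Pt' | Ht' Pt'] //.
    exact: Hb.
exists t; split=> // t'; rewrite inE => /orP [/eqP -> Pt' | Ht' Pt'].
  move: Ht; rewrite inE => /orP [/eqP -> | Ht]; first exact: Rr.
  by exfalso; apply: Hl; exists t.
by exfalso; apply: Hl; exists t'.
Qed.

Section Paths.
Variables (C : Type) (A : arena C).
Local Notation V := (Vt A).
Local Notation E := (Et A).

Lemma prefixS (p : nat -> E) t : Defs.prefix p t.+1 = rcons (Defs.prefix p t) (p t).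
Proof. by rewrite /Defs.prefix -addn1 iotaD map_cat cats1. Qed.

Lemma size_prefix (p : nat -> E) t : size (Defs.prefix p t) = t.
Proof. by rewrite /Defs.prefix size_map size_iota. Qed.

Lemma is_path_cat (v : V) (a b : seq E) :
  is_path v (a ++ b) = is_path v a && is_path (path_target v a) b.
Proof. by elim: a v => [|e a IH] v //=; rewrite IH andbA. Qed.

Lemma path_target_cat (v : V) (a b : seq E) :
  path_target v (a ++ b) = path_target (path_target v a) b.
Proof. by elim: a v => [|e a IH] v //=. Qed.

Lemma is_path_rcons (v : V) (a : seq E) e :
  is_path v (rcons a e) = is_path v a && (src e == path_target v a).
Proof. by rewrite -cats1 is_path_cat /= andbT. Qed.

Lemma path_target_rcons (v : V) (a : seq E) e : path_target v (rcons a e) = tgt e.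
Proof. by rewrite -cats1 path_target_cat. Qed.

Lemma ptarget_prefix (v : V) p t : inf_path_from v p -> path_target v (Defs.prefix p t) = src (p t).
Proof.
case=> H0 H1; elim: t => [|t IH]; first by rewrite H0.
by rewrite prefixS path_target_rcons H1.
Qed.
End Paths.

Section Main.
Variables (C : Type) (A : arena C).
Local Notation V := (Vt A).
Local Notation E := (Et A).
Variable pref : (nat -> C) -> (nat -> C) -> Prop.
Hypothesis Hpref : preference pref.
Variable S1 : strategy A.
Hypothesis HS1 : is_strategy S1.
Variables (M : finType) (m0 : M) (dl : M -> E -> M).
Hypothesis HM : is_M_strategy m0 dl S1.

Definition outE (x : V) : E :=
  proj1_sig (constructive_indefinite_description _ (out_edge x)).
Lemma outE_src x : src (outE x) = x.
Proof. rewrite /outE; by case: (constructive_indefinite_description _ _). Qed.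

Definition Dw (x : V) (m : M) : V * seq E :=
  epsilon (inhabits (x, [::])) (fun p => is_path p.1 p.2 /\
     path_target p.1 p.2 = x /\ delta_star dl m0 p.2 = m).
Definition D (x : V) (m : M) : E :=
  let p := Dw x m in
  if [&& is_path p.1 p.2, path_target p.1 p.2 == x & delta_star dl m0 p.2 == m]
  then S1 p.1 p.2 else outE x.

Lemma D_src x m : x \in V0 A -> src (D x m) = x.
Proof.
move=> Hx; rewrite /D.
case: ifP => [/and3P [H1 /eqP H2 _] | _]; last exact: outE_src.
rewrite (HS1 H1) ?H2 //; by rewrite H2.
Qed.

Lemma D_S1 s es x m : is_path s es -> path_target s es = x -> x \in V0 A ->
  delta_star dl m0 es = m -> D x m = S1 s es.
Proof.
move=> H1 H2 H3 H4.
have := @epsilon_spec _ (inhabits (x, [::])) (fun p => is_path p.1 p.2 /\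
     path_target p.1 p.2 = x /\ delta_star dl m0 p.2 = m) (ex_intro _ (s, es) (conj H1 (conj H2 H4))).
rewrite /D -/(Dw x m); case: (Dw x m) => s' es' /= [K1 [K2 K3]].
rewrite K1 K2 K3 !eqxx /=.
apply: HM => //; [by rewrite K2 H2 | by rewrite K2 | by rewrite K3 H4].
Qed.

Definition le_start (a b : V) := forall beta, col_set S1 a beta ->
  exists alpha, col_set S1 b alpha /\ pref alpha beta.

Lemma le_start_refl a : le_start a a.
Proof. case: Hpref => Hr _ beta Hb; by exists beta. Qed.

Lemma le_start_trans a b c : le_start a b -> le_start b c -> le_start a c.
Proof.
case: Hpref => _ [Ht _] H1 H2 beta Hb.
have [al [Ha Hp]] := H1 beta Hb.
have [al' [Ha' Hp']] := H2 al Ha.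
exists al'; split=> //; exact: Ht Hp' Hp.
Qed.

Lemma le_start_total a b : le_start a b \/ le_start b a.
Proof.
case: Hpref => _ [_ Htot].
case: (classic (le_start a b)) => H; first by left.
right; apply: NNPP => H'; apply: H => beta Hb.
apply: NNPP => H2; apply: H' => beta' Hb'.
exists beta; split => //.
case: (Htot beta' beta) => // Hp.
by exfalso; apply: H2; exists beta'.
Qed.

Definition mem2 := {ffun V -> option (V * M)}.

Definition cand (g : mem2) (c : C) (y : V) (sm : V * M) : Prop :=
  exists x m e, g x = Some (sm.1, m) /\ src e = x /\ tgt e = y /\ col e = c /\
    (x \in V0 A -> e = D x m) /\ sm.2 = dl m e.

Definition selP g c y (o : option (V * M)) : Prop :=
  match o with
  | None => forall sm, ~ cand g c y sm
  | Some sm => cand g c y sm /\ forall sm', cand g c y sm' -> le_start sm.1 sm'.1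
  end.

Definition sel g c y : option (V * M) := epsilon (inhabits None) (selP g c y).

Lemma sel_spec g c y : selP g c y (sel g c y).
Proof.
apply: epsilon_spec.
case: (classic (exists sm, cand g c y sm)) => H.
  have [sm [H1 H2]] := @best_elem _ (cand g c y) (fun a b => le_start a.1 b.1)
    (fun a => @le_start_refl a.1) (fun a b c => @le_start_trans a.1 b.1 c.1)
    (fun a b => @le_start_total a.1 b.1) H.
  by exists (Some sm).
by exists None => sm Hc; apply: H; exists sm.
Qed.

Definition sig2 (g : mem2) (c : C) : mem2 := [ffun y => sel g c y].
Definition dl2 (g : mem2) (e : E) : mem2 := sig2 g (col e).
Definition g0 : mem2 := [ffun x => Some (x, m0)].
Definition Dec (g : mem2) (x : V) : E :=
  match g x with Some sm => D x sm.2 | None => outE x end.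
Definition S2 : strategy A := fun v es => Dec (delta_star dl2 g0 es) (path_target v es).

Lemma S2_strategy : is_strategy S2.
Proof.
move=> v es _ Hx; rewrite /S2 /Dec.
case: (delta_star dl2 g0 es (path_target v es)) => [sm|]; [exact: D_src | exact: outE_src].
Qed.

Lemma S2_chrom : chromatic_qstate_strategy ((#|V| * #|M|).+1 ^ #|V|) S2.
Proof.
exists mem2, g0, dl2; split.
  by rewrite card_ffun card_option card_prod.
split; first by exists sig2.
move=> v1 es1 v2 es2 _ _ Ht _ Hd; by rewrite /S2 Ht Hd.
Qed.

Definition fin_ok (beta : nat -> C) (s : V) (es : seq E) :=
  is_path s es /\ forall i, i < size es -> col (nth (outE s) es i) = beta i /\
     (src (nth (outE s) es i) \in V0 A -> nth (outE s) es i = S1 s (take i es)).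

Lemma fin_ok_rcons beta s es e : fin_ok beta s es -> src e = path_target s es ->
  col e = beta (size es) -> (src e \in V0 A -> e = S1 s es) -> fin_ok beta s (rcons es e).
Proof.
case=> H1 H2 He Hc Hv; split; first by rewrite is_path_rcons H1 He eqxx.
move=> i; rewrite size_rcons ltnS leq_eqVlt => /orP [/eqP -> | Hi].
  by rewrite nth_rcons ltnn eqxx -cats1 take_size_cat.
by rewrite nth_rcons Hi -cats1 takel_cat ?(ltnW Hi) //; apply: H2.
Qed.

Lemma fin_ok_cat beta s a b : fin_ok beta s (a ++ b) -> fin_ok beta s a.
Proof.
case=> H1 H2; split; first by move: H1; rewrite is_path_cat => /andP [].
move=> i Hi; have := H2 i; rewrite size_cat nth_cat Hi takel_cat ?(ltnW Hi) //.
apply; exact: leq_trans Hi (leq_addr _ _).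
Qed.

Definition reach beta s t x m := exists es, size es = t /\ fin_ok beta s es /\
  path_target s es = x /\ delta_star dl m0 es = m.
Definition valid beta t (g : mem2) := forall x s m, g x = Some (s, m) -> reach beta s t x m.

Lemma valid0 beta : valid beta 0 g0.
Proof.
move=> x s m; rewrite ffunE => -[<- <-]; exists [::]; do !split => //.
Qed.

Lemma valid_step beta t g : valid beta t g -> valid beta t.+1 (sig2 g (beta t)).
Proof.
move=> Hv y s m'; rewrite ffunE => Hs.
have := sel_spec g (beta t) y; rewrite Hs /= => -[[x [m [e [Hg [He [Ht [Hc [Hd Hm]]]]]]]] _].
have [es [Hsz [Hok [Hpt Hds]]]] := Hv _ _ _ Hg.
exists (rcons es e); split; first by rewrite size_rcons Hsz.
split.
  apply: fin_ok_rcons => //; first by rewrite He Hpt.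
    by rewrite Hc Hsz.
  move=> HV; rewrite Hd; last by rewrite -He.
  apply: D_S1 => //; [by case: Hok | by rewrite -He].
split; first by rewrite path_target_rcons.
by rewrite /delta_star foldl_rcons -/(delta_star dl m0 es) Hds; move: Hm => /= ->.
Qed.

Section Konig.
Variables (beta : nat -> C) (s : V).
Definition good (es : seq E) := forall N, exists tl, N <= size tl /\ fin_ok beta s (es ++ tl).

Lemma good_step es : good es -> exists e, good (rcons es e).
Proof.
move=> Hg; apply: NNPP => H.
have H1 : forall e, exists N, forall tl, N <= size tl -> ~ fin_ok beta s (rcons es e ++ tl).
  move=> e; apply: NNPP => H2; apply: H; exists e => N; apply: NNPP => H3; apply: H2.
  exists N => tl Htl Hf; apply: H3; by exists tl.
have H2 : forall l : seq E, exists N, forall e, e \in l -> forall tl, N <= size tl ->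
    ~ fin_ok beta s (rcons es e ++ tl).
  elim=> [|b l [N IH]]; first by exists 0.
  have [Nb Hb] := H1 b.
  exists (maxn N Nb) => a; rewrite inE => /orP [/eqP -> | Ha] tl Ht.
    apply: Hb; exact: leq_trans (leq_maxr _ _) Ht.
  apply: IH => //; exact: leq_trans (leq_maxl _ _) Ht.
have [N HN] := H2 (enum E).
have [tl [Hs Hf]] := Hg N.+1.
case: tl Hs Hf => [|e tl] //= Hs Hf.
apply: (HN e (mem_enum _ _) tl Hs); by rewrite -cats1 -catA.
Qed.

Lemma good_fin es : good es -> fin_ok beta s es.
Proof. move=> Hg; have [tl [_ Hf]] := Hg 0; exact: fin_ok_cat Hf. Qed.

Hypothesis Hg0 : good [::].

Definition nxt es := epsilon (inhabits (outE s)) (fun e => good (rcons es e)).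
Fixpoint pseq k := if k is k'.+1 then rcons (pseq k') (nxt (pseq k')) else [::].
Definition pinf i := nxt (pseq i).

Lemma good_pseq k : good (pseq k).
Proof.
elim: k => [|k IH] //=; rewrite /nxt; apply: (epsilon_spec (inhabits (outE s)) (fun e => good (rcons (pseq k) e))).
exact: good_step.
Qed.

Lemma pseq_eq k : pseq k = Defs.prefix pinf k.
Proof. by elim: k => [|k IH] //=; rewrite prefixS -IH. Qed.

Lemma pinf_col_set : col_set S1 s beta.
Proof.
exists pinf; split; last split.
- split.
    have [] := good_fin (good_pseq 1); rewrite /= /pinf; by case/andP => /eqP.
  move=> i; have [] := good_fin (good_pseq i.+2).
  rewrite /= is_path_rcons => /andP [_ /eqP ->]; by rewrite path_target_rcons.
- move=> i; have [_ H] := good_fin (good_pseq i.+1).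
  have := H i; rewrite /= size_rcons pseq_eq size_prefix ltnSn nth_rcons size_prefix ltnn eqxx.
  rewrite -cats1 take_size_cat ?size_prefix //; case=> // _ K.
  change (pinf i) with (nxt (pseq i)); rewrite pseq_eq; exact: K.
- apply: (@functional_extensionality nat C) => i.
  have [_ H] := good_fin (good_pseq i.+1).
  have := H i; rewrite /= size_rcons pseq_eq size_prefix ltnSn nth_rcons size_prefix ltnn eqxx.
  by case=> // <- _; rewrite /pinf pseq_eq.
Qed.
End Konig.

Lemma S2_good v : at_least_as_good pref S2 S1 v.
Proof.
move=> beta [p [Hp [Hc ->]]].
set b := fun i => col (p i).
pose G t := delta_star dl2 g0 (Defs.prefix p t).
have GS t : G t.+1 = sig2 (G t) (b t).
  by rewrite /G prefixS /delta_star foldl_rcons.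
have Hval t : valid b t (G t).
  elim: t => [|t IH]; first exact: valid0.
  rewrite (GS t); exact: valid_step.
have Hinv t : exists s m, G t (src (p t)) = Some (s, m) /\ le_start s v.
  elim: t => [|t [s [m [Hg Hle]]]].
    exists v, m0; rewrite /G /= ffunE; case: Hp => -> _; split => //; exact: le_start_refl.
  have Hcand : cand (G t) (b t) (src (p t.+1)) (s, dl m (p t)).
    exists (src (p t)), m, (p t); do !split => //.
      by case: Hp => _ ->.
    move=> HV; rewrite {1}(Hc t HV) /S2 (ptarget_prefix t Hp) -/(G t) /Dec Hg //.
  rewrite GS ffunE.
  have := sel_spec (G t) (b t) (src (p t.+1)).
  case: (sel _ _ _) => [[s' m']|]; last by move=> H; exfalso; exact: H Hcand.
  case=> _ H; exists s', m'; split => //.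
  exact: le_start_trans (H _ Hcand) Hle.
pose st t := if G t (src (p t)) is Some sm then sm.1 else v.
have [s Hs] := inf_often st.
have Hgood : good b s [::].
  move=> N; have [t [HNt Hst]] := Hs N.
  have [s1 [m [Hg _]]] := Hinv t.
  move: Hst; rewrite /st Hg /= => Es; subst s1.
  have [es [Hsz [Hok _]]] := Hval t _ _ _ Hg.
  by exists es; rewrite Hsz.
have Hcs := pinf_col_set Hgood.
have [t [_ Hst]] := Hs 0.
have [s1 [m [Hg Hle]]] := Hinv t.
move: Hst; rewrite /st Hg /= => Es; subst s1.
exact: Hle Hcs.
Qed.

End Main.

Theorem corollary2 (C : Type) (pref : (nat -> C) -> (nat -> C) -> Prop)
  (Hpref : preference pref) (n q : nat) (Hn : 0 < n) (Hq : 0 < q)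
  (A : arena C) (HV : #|Vt A| = n)
  (S1 : strategy A) (HS1 : is_strategy S1) (HS1q : qstate_strategy q S1) :
  exists S2 : strategy A,
    is_strategy S2 /\ chromatic_qstate_strategy ((q * n + 1) ^ n) S2 /\
    forall v : Vt A, at_least_as_good pref S2 S1 v.
Proof.
case: HS1q => M [m0 [dl [HMc HM]]].
exists (S2 pref S1 m0 dl); split; first exact: S2_strategy.
split.
  have := S2_chrom pref S1 m0 dl; by rewrite HV HMc addn1 mulnC.
move=> v; exact: S2_good.
Qed.
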